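(* Let $n\ge3$, let $S_n$ act on $V=\mathbb{C}^n$ by permutations, and fix $a,b\in\mathbb{C}$. Then $\phi(\kappa^L_{\mathrm{tri}},\kappa^L_{\mathrm{tri}})=2\psi(\kappa^C_{\mathrm{penta}})$.
   Context: $S_n$ acts by $\sigma e_i=e_{\sigma(i)}$; $V^g$ is the fixed space of $g$. $\kappa^L_{\mathrm{tri}}=\sum_g\kappa^L_gg$ is the linear 2-cochain supported on 3-cycles with $\kappa^L_{(ijk)}(e_i,e_j)=\kappa^L_{(ijk)}(e_j,e_k)=\kappa^L_{(ijk)}(e_k,e_i)=a(e_i+e_j+e_k)+b\sum_{l\notin\{i,j,k\}}e_l$ and $\kappa^L_{(ijk)}(e_l,e_m)=0$ whenever $e_l$ or $e_m$ lies in $V^{(ijk)}$. $\kappa^C_{\mathrm{penta}}=\sum_g\kappa^C_gg$ is the constant 2-cochain with $\kappa^C_g=0$ unless $g$ is a 5-cycle, and for a 5-cycle $g$, $\kappa^C_g(e_i,e_j)=(a-b)^2([g]_{ij}-[g]_{ji}-2[g^2]_{ij}+2[g^2]_{ji})$, where $[h]_{ij}=1$ if $i=h(j)$ and $0$ otherwise. For a 2-cochain $\alpha$, $\psi(\alpha)=\sum_g\psi_gg$ with $\psi_g(v_1,v_2,v_3)=\alpha_g(v_1,v_2)(gv_3-v_3)+\alpha_g(v_2,v_3)(gv_1-v_1)+\alpha_g(v_3,v_1)(gv_2-v_2)$; for $\alpha,\beta$ with $\beta$ linear, $\phi(\alpha,\beta)=\sum_g\phi_gg$, $\phi_g=\sum_{xy=g}\phi_{x,y}$,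 $\phi_{x,y}(v_1,v_2,v_3)=\alpha_x(v_1+yv_1,\beta_y(v_2,v_3))+\alpha_x(v_2+yv_2,\beta_y(v_3,v_1))+\alpha_x(v_3+yv_3,\beta_y(v_1,v_2))$. *)

(* Defs.v *)
From HB Require Import structures.
From mathcomp Require Import all_boot all_order all_algebra all_fingroup.
From mathcomp Require Import complex Rstruct.
Set Implicit Arguments. Unset Strict Implicit. Unset Printing Implicit Defensive.
Import GRing.Theory.
Local Open Scope ring_scope.

Definition C : fieldType := (Rdefinitions.R)[i].

Section Cochains.
Variable n : nat.

Notation V := 'rV[C]_n.

Definition e (i : 'I_n) : V := delta_mx 0 i.

(* permutation action  sigma e_i = e_(sigma i), i.e. (sigma v)_j = v_(sigma^-1 j) *)
Definition pact (s : 'S_n) (v : V) : V := \row_j v 0 (s^-1 j)%g.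

(* product x y in the group S_n, as the paper writes it: the composite x o y
   (so that pact (gmul x y) = pact x o pact y).  Note mathcomp's (y * x)%g
   is the function  i |-> x (y i). *)
Definition gmul (x y : 'S_n) : 'S_n := (y * x)%g.

Definition is_cycle (k : nat) (g : 'S_n) : bool :=
  [exists x, (#|porbit g x| == k) && [forall y, (y \notin porbit g x) ==> (g y == y)]].

Definition bilin (X : lmodType C) (f : 'I_n -> 'I_n -> X) (v1 v2 : V) : X :=
  \sum_(p < n) \sum_(q < n) (v1 0 p * v2 0 q) *: f p q.

Definition lin2cochain := 'S_n -> V -> V -> V.
Definition const2cochain := 'S_n -> V -> V -> C.
Definition lin3cochain := 'S_n -> V -> V -> V -> V.

Definition kappaL_basis (a b : C) (g : 'S_n) (p q : 'I_n) : V :=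
  let w : V := \row_l (if g l != l then a else b) in
  if is_cycle 3 g && (g p != p) && (g q != q) then
    (if q == g p then w else if p == g q then - w else 0)
  else 0.

Definition kappaL_tri (a b : C) : lin2cochain :=
  fun g => bilin (kappaL_basis a b g).

Definition pmat (h : 'S_n) (i j : 'I_n) : C := if i == h j then 1 else 0.

Definition kappaC_basis (a b : C) (g : 'S_n) (i j : 'I_n) : C :=
  if is_cycle 5 g then
    (a - b) ^+ 2 * (pmat g i j - pmat g j i - 2 * pmat (g * g)%g i j
                    + 2 * pmat (g * g)%g j i)
  else 0.

Definition kappaC_penta (a b : C) : const2cochain :=
  fun g => bilin (X := C^o) (kappaC_basis a b g).

Definition psi (alpha : const2cochain) : lin3cochain :=
  fun g v1 v2 v3 =>
    alpha g v1 v2 *: (pact g v3 - v3) + alpha g v2 v3 *: (pact g v1 - v1)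
    + alpha g v3 v1 *: (pact g v2 - v2).

(* phi(alpha, beta) for linear beta (here alpha linear too, so values in V) *)
Definition phi_xy (alpha beta : lin2cochain) (x y : 'S_n) (v1 v2 v3 : V) : V :=
  alpha x (v1 + pact y v1) (beta y v2 v3) + alpha x (v2 + pact y v2) (beta y v3 v1)
  + alpha x (v3 + pact y v3) (beta y v1 v2).

Definition phi (alpha beta : lin2cochain) : lin3cochain :=
  fun g v1 v2 v3 =>
    \sum_(x : 'S_n) \sum_(y : 'S_n | gmul x y == g) phi_xy alpha beta x y v1 v2 v3.

End Cochains.

(* Main.v *)
Require Import Defs.
From HB Require Import structures.
From mathcomp Require Import all_boot all_order all_algebra all_fingroup.
From mathcomp Require Import complex Rstruct.
From mathcomp Require Import ring.
Set Implicit Arguments. Unset Strict Implicit. Unset Printing Implicit Defensive.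
Import GRing.Theory.
Local Open Scope ring_scope.

Ltac dsimp1 := repeat match goal with
 | H : is_true (?a != ?b) |- context [?a == ?b] => rewrite (negbTE H)
 | H : is_true (?a != ?b) |- context [?b == ?a] => rewrite (eq_sym b a) (negbTE H)
 end; rewrite ?eqxx /=.
Ltac dsimp := do 4 dsimp1; try done.

Ltac pts3 z p q r := case: (z =P p) => [->|/eqP ?]; [|case: (z =P q) => [->|/eqP ?]; [|case: (z =P r) => [->|/eqP ?]]].

Ltac symd := repeat match goal with H : is_true (?a != ?b) |- _ =>
  lazymatch goal with
  | _ : is_true (b != a) |- _ => fail
  | _ => have ? : b != a by rewrite eq_sym
  end end.

Ltac splitb := repeat match goal with H : is_true (_ && _) |- _ => case/andP: H => ? ? end.
Ltac uniqH H := rewrite /= !inE !negb_or in H; splitb.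

Section S.
Variable n : nat.
Implicit Types (p q r z : 'I_n) (g : 'S_n) (u v : 'rV[C]_n) (a b : C).

Definition c3 p q r : 'S_n := (tperm q r * tperm p q)%g.

Lemma c3E p q r z : p != q -> q != r -> p != r ->
  c3 p q r z = if z == p then q else if z == q then r else if z == r then p else z.
Proof.
move=> pq qr pr; rewrite permM.
case: (z =P p) => [->|zp].
  by rewrite (tpermD (x:=q)) 1?eq_sym // tpermL.
case: (z =P q) => [->|zq]; first by rewrite tpermL tpermD.
case: (z =P r) => [->|zr]; first by rewrite !tpermR.
by rewrite !tpermD // eq_sym; apply/eqP.
Qed.


Lemma cycle_at k g q : is_cycle k g -> g q != q ->
  [/\ uniq (traject g q k), iter k g q = q &
      forall y, y \notin traject g q k -> g y = y].
Proof.
case/existsP=> x0 /andP[/eqP Hc /forallP Hf] gq.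
have qin : q \in porbit g x0.
  apply/negPn/negP => H; move: (Hf q); rewrite H /= => /eqP Hq.
  by rewrite Hq eqxx in gq.
have Hpq : porbit g q = porbit g x0 by apply/eqP; rewrite eq_porbit_mem.
have Hk : #|porbit g q| = k by rewrite Hpq.
split.
- by rewrite -Hk; apply: uniq_traject_porbit.
- by rewrite -{1}Hk; apply: iter_porbit.
- move=> y Hy; apply/eqP; move: (Hf y); rewrite -Hpq porbit_traject Hk.
  by rewrite (negbTE Hy).
Qed.

Lemma cycle_of k g q : (0 < k)%N -> uniq (traject g q k) -> iter k g q = q ->
  (forall y, y \notin traject g q k -> g y = y) -> is_cycle k g.
Proof.
move=> k0 Hu Hi Hf.
have clos : forall z, z \in traject g q k -> g z \in traject g q k.
  move=> z /trajectP[j jk ->]; rewrite -iterS.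
  case: (ltnP j.+1 k) => H; first by apply/trajectP; exists j.+1.
  have -> : j.+1 = k by apply/eqP; rewrite eqn_leq H andbT.
  by rewrite Hi; apply/trajectP; exists 0%N.
have E : porbit g q =i traject g q k.
  move=> y; apply/idP/idP.
    case/porbitP=> i ->; rewrite permX; elim: i => [|i IH].
      by apply/trajectP; exists 0%N.
    by rewrite iterS; apply: clos.
  by case/trajectP=> i _ ->; rewrite -permX mem_porbit.
apply/existsP; exists q; apply/andP; split.
  by rewrite (eq_card E) (card_uniqP Hu) size_traject.
apply/forallP=> y; apply/implyP; rewrite E => Hy; apply/eqP; exact: Hf.
Qed.

Lemma c3_cycle p q r : p != q -> q != r -> p != r -> is_cycle 3 (c3 p q r).
Proof.
move=> pq qr pr; apply: (@cycle_of 3 _ p) => //=; rewrite !c3E //; dsimp.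
- by rewrite !inE !negb_or; dsimp.
- move=> w; rewrite !inE !negb_or => /and3P[wp wq wr].
  by rewrite c3E //; dsimp.
Qed.

Lemma cyc_moved k g : (1 < k)%N -> is_cycle k g -> exists q, g q != q.
Proof.
move=> k1 /existsP[x0 /andP[/eqP Hc _]]; exists x0; apply/negP=> /eqP H.
have := uniq_traject_porbit g x0; rewrite Hc.
by case: k k1 {Hc} => [|[|k]] //= _; rewrite H inE eqxx.
Qed.

Lemma cyc3_c3 g q : is_cycle 3 g -> g q != q ->
  [/\ q != g q, g q != g (g q), q != g (g q) & g = c3 q (g q) (g (g q))].
Proof.
move=> Hc Hq; case: (cycle_at Hc Hq) => /=; rewrite !inE !negb_or.
move=> /and3P[/andP[H1 H2] H3 _] Hi Hf.
split => //; apply/permP => z; rewrite c3E //.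
case: (z =P q) => [->|/eqP zq] //.
case: (z =P g q) => [->|/eqP zq1] //.
case: (z =P g (g q)) => [->|/eqP zq2] //.
by apply: Hf; rewrite !inE !negb_or; dsimp.
Qed.

Lemma c3_rot p q r : p != q -> q != r -> p != r -> c3 p q r = c3 q r p.
Proof.
move=> pq qr pr; have qp : q != p by rewrite eq_sym.
have rp : r != p by rewrite eq_sym.
apply/permP => z; rewrite !c3E //.
case: (z =P p) => [->|/eqP zp]; dsimp.
Qed.

Lemma c3V p q r z : p != q -> q != r -> p != r ->
  (c3 p q r)^-1%g z = if z == p then r else if z == q then p else if z == r then q else z.
Proof.
move=> pq qr pr; apply: (canLR (permK (c3 p q r))); rewrite c3E //.
case: (z =P p) => [->|/eqP zp]; dsimp.
case: (z =P q) => [->|/eqP zq]; dsimp.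
case: (z =P r) => [->|/eqP zr]; dsimp.
Qed.

Section Bilin.
Variable X : lmodType C.
Implicit Types (f h : 'I_n -> 'I_n -> X).

Lemma eq_bilin f h u v : (forall i j, f i j = h i j) -> bilin f u v = bilin h u v.
Proof. by move=> H; apply: eq_bigr => i _; apply: eq_bigr => j _; rewrite H. Qed.

Lemma bilinD f h u v : bilin (fun i j => f i j + h i j) u v = bilin f u v + bilin h u v.
Proof.
rewrite /bilin -big_split; apply: eq_bigr => i _ /=.
by rewrite -big_split; apply: eq_bigr => j _; rewrite scalerDr.
Qed.

Lemma bilinN f u v : bilin (fun i j => - f i j) u v = - bilin f u v.
Proof.
rewrite /bilin -sumrN; apply: eq_bigr => i _ /=.
by rewrite -sumrN; apply: eq_bigr => j _; rewrite scalerN.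
Qed.

Lemma bilinZ (c : C) f u v : bilin (fun i j => c *: f i j) u v = c *: bilin f u v.
Proof.
rewrite /bilin scaler_sumr; apply: eq_bigr => i _ /=.
by rewrite scaler_sumr; apply: eq_bigr => j _; rewrite !scalerA mulrC.
Qed.

Lemma bilin_sum (F : 'I_n -> 'I_n -> 'I_n -> X) u v :
  bilin (fun i j => \sum_m F m i j) u v = \sum_m bilin (F m) u v.
Proof.
rewrite /bilin; symmetry; rewrite exchange_big; apply: eq_bigr => i _ /=.
rewrite exchange_big; apply: eq_bigr => j _; by rewrite scaler_sumr.
Qed.

Lemma bilin_d (w : X) p q u v :
  bilin (fun i j => if (i == p) && (j == q) then w else 0) u v = (u 0 p * v 0 q) *: w.
Proof.
rewrite /bilin (bigD1 p) //= [X in _ + X]big1 ?addr0; last first.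
  by move=> i /negbTE ip; rewrite big1 // => j _; rewrite ip /= scaler0.
rewrite (bigD1 q) //= [X in _ + X]big1 ?addr0; last first.
  by move=> j /negbTE jq; rewrite eqxx jq scaler0.
by rewrite !eqxx.
Qed.
End Bilin.

Definition om p q r (u v : 'rV[C]_n) : C :=
  u 0 p * (v 0 q - v 0 r) + u 0 q * (v 0 r - v 0 p) + u 0 r * (v 0 p - v 0 q).
Definition wv (a b : C) p q r : 'rV[C]_n :=
  \row_l (if (l == p) || (l == q) || (l == r) then a else b).
Definition D (X : lmodType C) (w : X) p q (i j : 'I_n) : X :=
  if (i == p) && (j == q) then w else 0.

Lemma kLb_c3 a b p q r i j : p != q -> q != r -> p != r ->
  kappaL_basis a b (c3 p q r) i j =
  D (wv a b p q r) p q i j + D (wv a b p q r) q r i j + D (wv a b p q r) r p i j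
  - D (wv a b p q r) q p i j - D (wv a b p q r) r q i j - D (wv a b p q r) p r i j.
Proof.
move=> pq qr pr; have qp : q != p by rewrite eq_sym.
have rp : r != p by rewrite eq_sym. have rq : r != q by rewrite eq_sym.
rewrite /kappaL_basis c3_cycle //=.
have -> : \row_l (if c3 p q r l != l then a else b) = wv a b p q r.
  apply/rowP => l; rewrite !mxE c3E //; pts3 l p q r; dsimp.
rewrite /D; pts3 i p q r; pts3 j p q r; rewrite ?c3E //; dsimp;
  rewrite ?addr0 ?subr0 ?add0r ?sub0r //.
Qed.

Lemma kL_c3 a b p q r u v : p != q -> q != r -> p != r ->
  kappaL_tri a b (c3 p q r) u v = om p q r u v *: wv a b p q r.
Proof.
move=> pq qr pr; rewrite /kappaL_tri (eq_bilin _ _ (fun i j => @kLb_c3 a b p q r i j pq qr pr)).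
rewrite !bilinD !bilinN /D !bilin_d /om.
apply/rowP => l; rewrite !mxE; ring.
Qed.

Notation K a b := (kappaL_tri a b).

Lemma om_scale p q r u (c : C) w : om p q r u (c *: w) = c * om p q r u w.
Proof. rewrite /om !mxE; ring. Qed.

Lemma phi_c3 a b p1 p2 p3 s1 s2 s3 v1 v2 v3 :
  p1 != p2 -> p2 != p3 -> p1 != p3 -> s1 != s2 -> s2 != s3 -> s1 != s3 ->
  phi_xy (K a b) (K a b) (c3 p1 p2 p3) (c3 s1 s2 s3) v1 v2 v3 =
  (om s1 s2 s3 v2 v3 * om p1 p2 p3 (v1 + pact (c3 s1 s2 s3) v1) (wv a b s1 s2 s3)
 + om s1 s2 s3 v3 v1 * om p1 p2 p3 (v2 + pact (c3 s1 s2 s3) v2) (wv a b s1 s2 s3)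
 + om s1 s2 s3 v1 v2 * om p1 p2 p3 (v3 + pact (c3 s1 s2 s3) v3) (wv a b s1 s2 s3))
  *: wv a b p1 p2 p3.
Proof.
move=> *; rewrite /phi_xy !kL_c3 // !om_scale.
by rewrite !scalerDl.
Qed.

Ltac crunch := symd; rewrite /om /pact /wv !mxE ?c3V //; dsimp; ring.

Lemma zero_disj a b p1 p2 p3 s1 s2 s3 v1 v2 v3 :
  uniq [:: p1; p2; p3; s1; s2; s3] ->
  phi_xy (K a b) (K a b) (c3 p1 p2 p3) (c3 s1 s2 s3) v1 v2 v3 = 0.
Proof.
move=> H; uniqH H.
rewrite phi_c3 //.
match goal with |- ?c *: _ = 0 => have -> : c = 0 by crunch end.
by rewrite scale0r.
Qed.

Lemma zero_cases a b q x1 x2 y1 y2 v1 v2 v3 :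
  q != x1 -> x1 != x2 -> q != x2 -> q != y1 -> y1 != y2 -> q != y2 ->
  ~~ [&& x1 != y1, x1 != y2, x2 != y1 & x2 != y2] ->
  phi_xy (K a b) (K a b) (c3 q x1 x2) (c3 q y1 y2) v1 v2 v3 = 0.
Proof.
move=> ? ? ? ? ? ? H.
case: (x1 =P y1) => [?|/eqP ?]; case: (x2 =P y2) => [?|/eqP ?];
case: (x1 =P y2) => [?|/eqP ?]; case: (x2 =P y1)=> [?|/eqP ?]; subst;
  try (match goal with H : is_true (?a != ?a) |- _ => by rewrite eqxx in H end);
  move: H; symd; dsimp => _;
  rewrite phi_c3 //;
  match goal with |- ?c *: _ = 0 => have -> : c = 0 by crunch end;
  by rewrite scale0r.
Qed.

Lemma c3_moved p q r z : p != q -> q != r -> p != r ->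
  (c3 p q r z != z) = (z \in [:: p; q; r]).
Proof.
move=> pq qr pr; symd; rewrite c3E // !inE; pts3 z p q r; dsimp.
Qed.

Lemma cyc3_ex x q : is_cycle 3 x -> x q != q ->
  exists x1 x2, [/\ q != x1, x1 != x2, q != x2 & x = c3 q x1 x2].
Proof.
move=> Hx Hq; case: (cyc3_c3 Hx Hq) => h1 h2 h3 e.
by exists (x q), (x (x q)); split.
Qed.

Lemma classify a b x y v1 v2 v3 : is_cycle 3 x -> is_cycle 3 y ->
  phi_xy (K a b) (K a b) x y v1 v2 v3 = 0 \/
  exists q, [/\ uniq [:: q; y q; y (y q); x q; x (x q)],
     x = c3 (x q) (x (x q)) q & y = c3 q (y q) (y (y q))].
Proof.
move=> Hx Hy.
case: (pickP (fun q => (x q != q) && (y q != q))) => [q /andP[xq yq] | none].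
- have [x1 [x2 [h1 h2 h3 ex]]] := cyc3_ex Hx xq.
  have [y1 [y2 [k1 k2 k3 ey]]] := cyc3_ex Hy yq.
  subst x y; symd.
  case: (boolP [&& x1 != y1, x1 != y2, x2 != y1 & x2 != y2]) => Hc.
  + right; exists q; rewrite !c3E //; dsimp; splitb; symd; split.
    * by rewrite /= !inE !negb_or; dsimp.
    * by apply: c3_rot.
    * done.
  + by left; apply: zero_cases.
- have [p xp] := cyc_moved (isT : (1 < 3)%N) Hx.
  have [s ys] := cyc_moved (isT : (1 < 3)%N) Hy.
  have [p1 [p2 [h1 h2 h3 ex]]] := cyc3_ex Hx xp.
  have [s1 [s2 [k1 k2 k3 ey]]] := cyc3_ex Hy ys.
  subst x y; left.
  have Dj : forall i j, i \in [:: p; p1; p2] -> j \in [:: s; s1; s2] -> i != j.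
    by move=> i j Hi Hj; apply/eqP => E; subst j; move: (none i); rewrite /= (c3_moved i h1 h2 h3) (c3_moved i k1 k2 k3) Hi Hj.
  apply: zero_disj; rewrite /= !inE !negb_or; symd; dsimp.
  rewrite !andbT; apply/and3P; split; apply/and3P; split;
    by apply: Dj; rewrite !inE eqxx ?orbT.
Qed.

Lemma kL_zero a b (x : 'S_n) u v : ~~ is_cycle 3 x -> kappaL_tri a b x u v = 0.
Proof.
move=> /negbTE Hx; rewrite /kappaL_tri /bilin big1 // => i _; rewrite big1 // => j _.
by rewrite /kappaL_basis Hx /= scaler0.
Qed.

Lemma kL_0r a b (x : 'S_n) u : kappaL_tri a b x u 0 = 0.
Proof.
by rewrite /kappaL_tri /bilin big1 // => i _; rewrite big1 // => j _; rewrite mxE mulr0 scale0r.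
Qed.

Lemma phi_xy_zero a b (x y : 'S_n) (v1 v2 v3 : 'rV[C]_n) : ~~ (is_cycle 3 x && is_cycle 3 y) ->
  phi_xy (K a b) (K a b) x y v1 v2 v3 = 0.
Proof.
rewrite negb_and => /orP[Hx|Hy]; rewrite /phi_xy.
  by rewrite !kL_zero // !addr0.
by rewrite !(kL_zero _ _ _ _ Hy) !kL_0r !addr0.
Qed.

Lemma prod5 d0 d1 d2 d3 d4 : uniq [:: d0; d1; d2; d3; d4] ->
  let g := gmul (c3 d3 d4 d0) (c3 d0 d1 d2) in
  [/\ g d0 = d1, g d1 = d2, g d2 = d3, g d3 = d4 & g d4 = d0] /\
      forall z, z \notin [:: d0; d1; d2; d3; d4] -> g z = z.
Proof.
move=> H; uniqH H; symd; rewrite /gmul; split; first by split; rewrite permM !c3E //; dsimp.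
move=> z Hz; uniqH Hz; rewrite permM !c3E //; dsimp.
Qed.

Lemma prod5_cycle d0 d1 d2 d3 d4 : uniq [:: d0; d1; d2; d3; d4] ->
  is_cycle 5 (gmul (c3 d3 d4 d0) (c3 d0 d1 d2)).
Proof.
move=> H; case: (prod5 H) => [[e0 e1 e2 e3 e4] ef].
apply: (@cycle_of 5 _ d0) => //=; rewrite ?e0 ?e1 ?e2 ?e3 ?e4 //.
Qed.

Lemma cyc5_data g l0 : is_cycle 5 g -> g l0 != l0 ->
  [/\ uniq [:: l0; g l0; g (g l0); g (g (g l0)); g (g (g (g l0)))],
      g (g (g (g (g l0)))) = l0 &
      forall z, z \notin [:: l0; g l0; g (g l0); g (g (g l0)); g (g (g (g l0)))] -> g z = z].
Proof. by move=> Hc Hl; case: (cycle_at Hc Hl). Qed.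

Definition Xq g q := c3 (g (g (g q))) (g (g (g (g q)))) q.
Definition Yq g q := c3 q (g q) (g (g q)).

Ltac in5 H := move: H; rewrite !inE => /orP[/eqP->|/orP[/eqP->|/orP[/eqP->|/orP[/eqP->|/eqP->]]]].

Lemma XY_gmul g q : is_cycle 5 g -> g q != q -> gmul (Xq g q) (Yq g q) = g.
Proof.
move=> Hc Hq; have [U e5 ef] := cyc5_data Hc Hq.
have [[e0 e1 e2 e3 e4] ef'] := prod5 U.
apply/permP => z; case: (boolP (z \in [:: q; g q; g (g q); g (g (g q)); g (g (g (g q)))])) => Hz.
  by rewrite /Xq /Yq; in5 Hz; rewrite ?e0 ?e1 ?e2 ?e3 ?e4 ?e5.
by rewrite /Xq /Yq ef' // ef.
Qed.

Lemma moved5 g l0 q : is_cycle 5 g -> g l0 != l0 ->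
  (g q != q) = (q \in [:: l0; g l0; g (g l0); g (g (g l0)); g (g (g (g l0)))]).
Proof.
move=> Hc Hl; have [U e5 ef] := cyc5_data Hc Hl.
case: (boolP (q \in _)) => Hq; last by rewrite ef ?eqxx.
move: U => U; uniqH U; symd; in5 Hq; rewrite ?e5 //; dsimp.
Qed.

Lemma sum_moved (X : nmodType) g l0 (G : 'I_n -> X) : is_cycle 5 g -> g l0 != l0 ->
  \sum_(q in [set q | g q != q]) G q =
  G l0 + G (g l0) + G (g (g l0)) + G (g (g (g l0))) + G (g (g (g (g l0)))).
Proof.
move=> Hc Hl; have [U _ _] := cyc5_data Hc Hl.
rewrite (eq_bigl (fun q => q \in [:: l0; g l0; g (g l0); g (g (g l0)); g (g (g (g l0)))])).
  by rewrite -big_uniq // !big_cons big_nil /= addr0 !addrA.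
by move=> q; rewrite inE (moved5 _ Hc Hl).
Qed.

Lemma LHS_eval a b g l0 v1 v2 v3 : is_cycle 5 g -> g l0 != l0 ->
  let G q := phi_xy (K a b) (K a b) (Xq g q) (Yq g q) v1 v2 v3 in
  phi (K a b) (K a b) g v1 v2 v3 =
  G l0 + G (g l0) + G (g (g l0)) + G (g (g (g l0))) + G (g (g (g (g l0)))).
Proof.
move=> Hc Hl G; rewrite /phi pair_big_dep /=.
pose h q := (Xq g q, Yq g q).
have hinj : {in [set q | g q != q] &, injective h}.
  move=> q1 q2; rewrite !inE => H1 H2 [E1 E2].
  have [U e5 _] := cyc5_data Hc H2.
  have [U1 e51 _] := cyc5_data Hc H1.
  move: U1 => U1; uniqH U1.
  have m1 : q1 \in [:: q2; g q2; g (g q2)].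
    move: (U) => U'; uniqH U'; symd.
    by rewrite -c3_moved // -/(Yq g q2) -E2 /Yq c3E //; dsimp.
  have m2 : q1 \in [:: g (g (g q2)); g (g (g (g q2))); q2].
    move: (U) => U'; uniqH U'; symd.
    by rewrite -c3_moved // -/(Xq g q2) -E1 /Xq c3E //; dsimp.
  move: m1 m2; uniqH U; symd; rewrite !inE => /orP[/eqP->//|/orP[/eqP->|/eqP->]]; dsimp.
rewrite (_ : \sum_(p | gmul p.1 p.2 == g) _ = \sum_(p in h @: [set q | g q != q])
   phi_xy (K a b) (K a b) p.1 p.2 v1 v2 v3).
  by rewrite big_imset // (sum_moved _ Hc Hl).
rewrite big_mkcond [RHS]big_mkcond; apply: eq_bigr => -[x y] _ /=.
case: (boolP ((x, y) \in h @: [set q | g q != q])) => Hp.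
  case/imsetP: Hp => q; rewrite inE => Hq [-> ->].
  by rewrite XY_gmul // eqxx.
case: eqP => //= Cp.
case: (boolP (is_cycle 3 x && is_cycle 3 y)) => H3; last by rewrite phi_xy_zero.
case/andP: H3 => H1 H2; case: (classify a b v1 v2 v3 H1 H2) => // [[q [U ex ey]]].
exfalso; move/negP: Hp; apply; subst g.
have [[e0 e1 e2 e3 e4] _] := prod5 U.
rewrite -ex -ey in e0 e1 e2 e3 e4.
apply/imsetP; exists q.
  rewrite inE e0; by uniqH U; rewrite eq_sym.
by rewrite /h /Xq /Yq e0 e1 e2 e3 -ex -ey.
Qed.

Lemma bilin_pm (h : 'S_n) u v :
  bilin (X := C^o) (fun i j => pmat h i j) u v = \sum_m u 0 (h m) * v 0 m.
Proof.
rewrite /bilin exchange_big; apply: eq_bigr => m _ /=.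
rewrite (bigD1 (h m)) //= big1 ?addr0; last first.
  by move=> i /negbTE im; rewrite /pmat im /GRing.scale /= mulr0.
by rewrite /pmat eqxx /GRing.scale /= mulr1.
Qed.

Lemma bilin_pmT (h : 'S_n) u v :
  bilin (X := C^o) (fun i j => pmat h j i) u v = \sum_m u 0 m * v 0 (h m).
Proof.
rewrite /bilin; apply: eq_bigr => m _ /=.
rewrite (bigD1 (h m)) //= big1 ?addr0; last first.
  by move=> i /negbTE im; rewrite /pmat im /GRing.scale /= mulr0.
by rewrite /pmat eqxx /GRing.scale /= mulr1.
Qed.

Lemma kC_sum a b g u v : is_cycle 5 g ->
  kappaC_penta a b g u v = (a - b) ^+ 2 * \sum_m
    (u 0 (g m) * v 0 m - u 0 m * v 0 (g m)
     - 2 * (u 0 (g (g m)) * v 0 m) + 2 * (u 0 m * v 0 (g (g m)))).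
Proof.
move=> Hc; rewrite /kappaC_penta.
rewrite (eq_bilin (h := fun i j => (a - b) ^+ 2 *: (((pmat g i j - pmat g j i)
   - 2 *: pmat (g * g)%g i j) + 2 *: pmat (g * g)%g j i : C^o))); last first.
  by move=> i j; rewrite /kappaC_basis Hc.
rewrite bilinZ !bilinD !bilinN !bilinZ bilin_pm bilin_pmT bilin_pm bilin_pmT.
rewrite /GRing.scale /=; congr (_ * _).
have E : forall m, (g * g)%g m = g (g m) by move=> m; rewrite permM.
rewrite big_split !sumrB -!mulr_sumr /=.
by congr (_ - _ - 2 * _ + 2 * _); apply: eq_bigr => m _; rewrite E.
Qed.

Definition Tm g u v m : C := u 0 (g m) * v 0 m - u 0 m * v 0 (g m)
     - 2 * (u 0 (g (g m)) * v 0 m) + 2 * (u 0 m * v 0 (g (g m))).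

Lemma kC_eval a b g l0 u v : is_cycle 5 g -> g l0 != l0 ->
  kappaC_penta a b g u v = (a - b) ^+ 2 * (Tm g u v l0 + Tm g u v (g l0)
    + Tm g u v (g (g l0)) + Tm g u v (g (g (g l0))) + Tm g u v (g (g (g (g l0))))).
Proof.
move=> Hc Hl; rewrite kC_sum //; congr (_ * _).
rewrite -(sum_moved (fun m => Tm g u v m) Hc Hl).
rewrite (bigID (fun m => g m != m)) /= [X in _ + X]big1 ?addr0.
  by apply: eq_bigl => m; rewrite inE.
by move=> m /negPn /eqP H; rewrite H H; ring.
Qed.

Lemma kC_zero a b g u v : ~~ is_cycle 5 g -> kappaC_penta a b g u v = 0.
Proof.
move=> /negbTE Hc; rewrite /kappaC_penta /bilin big1 // => i _; rewrite big1 // => j _.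
by rewrite /kappaC_basis Hc /= scaler0.
Qed.

Lemma five a b g l0 l1 l2 l3 l4 v1 v2 v3 l :
  uniq [:: l0; l1; l2; l3; l4] -> g l0 = l1 -> g l1 = l2 -> g l2 = l3 -> g l3 = l4 ->
  g l4 = l0 ->
  (l = l0 \/ (l \notin [:: l0; l1; l2; l3; l4] /\ g l = l)) ->
  let G q := phi_xy (K a b) (K a b) (Xq g q) (Yq g q) v1 v2 v3 in
  let kk u v := (a - b) ^+ 2 * (Tm g u v l0 + Tm g u v (g l0) + Tm g u v (g (g l0))
     + Tm g u v (g (g (g l0))) + Tm g u v (g (g (g (g l0))))) in
  (G l0 + G (g l0) + G (g (g l0)) + G (g (g (g l0))) + G (g (g (g (g l0))))) 0 l =
  (2 *: (kk v1 v2 *: (pact g v3 - v3) + kk v2 v3 *: (pact g v1 - v1)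
         + kk v3 v1 *: (pact g v2 - v2))) 0 l.
Proof.
move=> U e0 e1 e2 e3 e4 Hl G kk; rewrite /G /kk /Xq /Yq /Tm.
rewrite ?e0 ?e1 ?e2 ?e3 ?e4 ?e0 ?e1 ?e2 ?e3 ?e4 ?e0 ?e1 ?e2 ?e3 ?e4.
uniqH U; symd; rewrite !phi_c3 //.
rewrite [in RHS]/pact !mxE.
case: Hl => [->|[Hm Hf]].
  have -> : (g^-1)%g l0 = l4 by rewrite -e4 permK.
  crunch.
have -> : (g^-1)%g l = l by rewrite -{1}Hf permK.
uniqH Hm; crunch.
Qed.
End S.

Unset Implicit Arguments.

Theorem proposition7p5 (n : nat) (hn : (3 <= n)%N) (a b : C) :
  forall (g : 'S_n) (v1 v2 v3 : 'rV[C]_n),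
    phi (kappaL_tri a b) (kappaL_tri a b) g v1 v2 v3
    = 2 *: psi (kappaC_penta a b) g v1 v2 v3.
Proof.
move=> g v1 v2 v3.
case: (boolP (is_cycle 5 g)) => Hc; last first.
  rewrite /psi !kC_zero // !scale0r !addr0 scaler0.
  rewrite /phi big1 // => x _; rewrite big1 // => y /eqP Hxy.
  case: (boolP (is_cycle 3 x && is_cycle 3 y)) => H3; last by rewrite phi_xy_zero.
  case/andP: H3 => H1 H2; case: (classify a b v1 v2 v3 H1 H2) => // [[q [U ex ey]]].
  by have := prod5_cycle U; rewrite -ex -ey Hxy => H5; rewrite H5 in Hc.
have [l0 Hl0] := cyc_moved (isT : (1 < 5)%N) Hc.
apply/rowP => l.
case: (boolP (g l != l)) => Hl.
  rewrite (@LHS_eval n a b g l v1 v2 v3 Hc Hl) /psi !(@kC_eval n a b g l _ _ Hc Hl).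
  have [U e5 _] := cyc5_data Hc Hl.
  have H := @five n a b g l (g l) (g (g l)) (g (g (g l))) (g (g (g (g l)))) v1 v2 v3 l
     U erefl erefl erefl erefl e5 (or_introl erefl).
  exact: H.
rewrite (@LHS_eval n a b g l0 v1 v2 v3 Hc Hl0) /psi !(@kC_eval n a b g l0 _ _ Hc Hl0).
have [U e5 _] := cyc5_data Hc Hl0.
have Hm : l \notin [:: l0; g l0; g (g l0); g (g (g l0)); g (g (g (g l0)))].
  by rewrite -(@moved5 n g l0 l Hc Hl0).
have Hf : g l = l by apply/eqP; rewrite negbK in Hl.
have H := @five n a b g l0 (g l0) (g (g l0)) (g (g (g l0))) (g (g (g (g l0)))) v1 v2 v3 l
     U erefl erefl erefl erefl e5 (or_intror (conj Hm Hf)).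
exact: H.
Qed.
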